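(* Let $N,K\ge 1$ be integers, $\mathbf{g}\in\mathbb{C}^{N}$, $\mathbf{h}_{r,k}\in\mathbb{C}^{N}$ and $h_{d,k}\in\mathbb{C}$ for $k=1,\dots,K$, with all entries of $\mathbf{g}$ and of every $\mathbf{h}_{r,k}$ nonzero and every $h_{d,k}\neq 0$. Let $\sigma^2>0$, $\sigma_r^2>0$, $P_r>0$, $T_{\max}>0$ and $E_k>0$ ($k=1,\dots,K$). Put $\mathbf{q}_k=\mathrm{diag}(\mathbf{g}^H)\mathbf{h}_{r,k}$, $\mathbf{G}=\mathrm{diag}(|[\mathbf{g}]_1|^2,\dots,|[\mathbf{g}]_N|^2)$, $\mathbf{H}_{r,k}=\mathrm{diag}(|[\mathbf{h}_{r,k}]_1|^2,\dots,|[\mathbf{h}_{r,k}]_N|^2)$. Consider the problem $$\max_{\{\tau_k\},\{p_k\},\{\mathbf{v}_k\}}\ \sum_{k=1}^K \tau_k\log_2\!\Big(1+\frac{p_k|h_{d,k}+\mathbf{v}_k^H\mathbf{q}_k|^2}{\sigma^2+\sigma_r^2\mathbf{v}_k^H\mathbf{G}\mathbf{v}_k}\Big)$$ over $\tau_k\in\mathbb{R}$, $p_k\in\mathbb{R}$, $\mathbf{v}_k\in\mathbb{C}^N$, subject to $\tau_kp_k\le E_k$ for all $k$; $\sum_{k=1}^K\tau_k\le T_{\max}$; $\tau_k\ge 0,\ p_k\ge0$ for all $k$; and $p_k\mathbf{v}_k^H\mathbf{H}_{r,k}\mathbf{v}_k+\sigma_r^2\|\mathbf{v}_k\|^2\le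 P_r$ for all $k$. Then at any optimal solution of this problem, $\tau_kp_k=E_k$ for every $k\in\{1,\dots,K\}$.
   Context: This is the sum-throughput maximization for active-IRS-aided TDMA uplink: device $k$ transmits for time $\tau_k$ with power $p_k$ and available energy $E_k$; $\mathbf{v}_k$ is the IRS reflection/amplification vector used in device $k$'s slot; $P_r$ is the IRS amplification power budget. *)

(* Defs.v *)
From HB Require Import structures.
From mathcomp Require Import all_boot all_order all_algebra.
From mathcomp Require Import reals exp.
From mathcomp Require Import complex.
Set Implicit Arguments. Unset Strict Implicit. Unset Printing Implicit Defensive.
Import Order.TTheory GRing.Theory Num.Theory ComplexField.
Local Open Scope ring_scope.
Local Open Scope complex_scope.

Definition cabs2 {R : rcfType} (z : R[i]) : R := (complex.Re z) ^+ 2 + (complex.Im z) ^+ 2.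

Definition log2 {R : realType} (x : R) : R := ln x / ln 2.

Definition hdot {R : rcfType} (N : nat) (a b : 'I_N -> R[i]) : R[i] :=
  \sum_(i < N) (a i)^* * b i.

(* q_k = diag(g^H) h_{r,k}, i.e. [q_k]_i = conj(g_i) * [h_{r,k}]_i *)
Definition qvec {R : rcfType} (N : nat) (g hr : 'I_N -> R[i]) : 'I_N -> R[i] :=
  fun i => (g i)^* * hr i.

(* v^H diag(|w_1|^2,...,|w_N|^2) v = sum_i |w_i|^2 |v_i|^2 *)
Definition wquad {R : rcfType} (N : nat) (w v : 'I_N -> R[i]) : R :=
  \sum_(i < N) cabs2 (w i) * cabs2 (v i).

Definition nrm2 {R : rcfType} (N : nat) (v : 'I_N -> R[i]) : R :=
  \sum_(i < N) cabs2 (v i).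

Section Problem.
Variables (R : realType) (N K : nat).
Variables (g : 'I_N -> R[i]) (hr : 'I_K -> 'I_N -> R[i]) (hd : 'I_K -> R[i]).
Variables (sigma2 sigmar2 Pr Tmax : R) (E : 'I_K -> R).

Definition snr (p : 'I_K -> R) (v : 'I_K -> 'I_N -> R[i]) (k : 'I_K) : R :=
  p k * cabs2 (hd k + hdot (v k) (qvec g (hr k)))
  / (sigma2 + sigmar2 * wquad g (v k)).

Definition throughput (tau p : 'I_K -> R) (v : 'I_K -> 'I_N -> R[i]) : R :=
  \sum_(k < K) tau k * log2 (1 + snr p v k).

Definition feasible (tau p : 'I_K -> R) (v : 'I_K -> 'I_N -> R[i]) : Prop :=
  (forall k, tau k * p k <= E k) /\
  (\sum_(k < K) tau k <= Tmax) /\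
  (forall k, 0 <= tau k /\ 0 <= p k) /\
  (forall k, p k * wquad (hr k) (v k) + sigmar2 * nrm2 (v k) <= Pr).

Definition optimal (tau p : 'I_K -> R) (v : 'I_K -> 'I_N -> R[i]) : Prop :=
  feasible tau p v /\
  forall tau' p' v', feasible tau' p' v' -> throughput tau' p' v' <= throughput tau p v.
End Problem.

(* Main.v *)
Require Import Defs.
From HB Require Import structures.
From mathcomp Require Import all_boot all_order all_algebra.
From mathcomp Require Import reals exp.
From mathcomp Require Import complex.
From mathcomp Require Import lra ring.
Import Order.TTheory GRing.Theory Num.Theory ComplexField.
Local Open Scope ring_scope.
Local Open Scope complex_scope.

Section Pf.
Variables (R : realType) (N K : nat).
Variables (g : 'I_N -> R[i]) (hr : 'I_K -> 'I_N -> R[i]) (hd : 'I_K -> R[i]).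
Variables (sigma2 sigmar2 Pr Tmax : R) (E : 'I_K -> R).
Hypotheses (Hs : 0 < sigma2) (Hsr : 0 < sigmar2) (HPr : 0 < Pr) (HT : 0 < Tmax)
  (HE : forall k, 0 < E k) (Hhd : forall k, hd k != 0).

Local Notation snr := (snr g hr hd sigma2 sigmar2).
Local Notation throughput := (throughput g hr hd sigma2 sigmar2).
Local Notation feasible := (feasible hr sigmar2 Pr Tmax E).
Local Notation optimal := (optimal g hr hd sigma2 sigmar2 Pr Tmax E).

Lemma sum_upd1 (F F' : 'I_K -> R) k : (forall i, i != k -> F' i = F i) ->
  \sum_i F' i = \sum_i F i + (F' k - F k).
Proof.
move=> H; rewrite (bigD1 k) //= [in RHS](bigD1 k) //=.
rewrite (eq_bigr F); last by move=> i /H.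
set S := \sum_(i | _) F i. lra.
Qed.

Lemma sum_upd2 (F F' : 'I_K -> R) j k : j != k ->
  (forall i, i != j -> i != k -> F' i = F i) ->
  \sum_i F' i = \sum_i F i + (F' j - F j) + (F' k - F k).
Proof.
move=> njk H; rewrite (bigD1 j) //= [in RHS](bigD1 j) //=.
rewrite (bigD1 k) /=; last by rewrite eq_sym.
rewrite [X in _ = _ + X + _ + _](bigD1 k) /=; last by rewrite eq_sym.
rewrite (eq_bigr F); last by move=> i /andP[? ?]; apply: H.
set S := \sum_(i | _) F i. lra.
Qed.

Lemma cabs2_ge0 (z : R[i]) : 0 <= cabs2 z.
Proof. by rewrite /cabs2 addr_ge0 // sqr_ge0. Qed.

Lemma cabs2N (z : R[i]) : cabs2 (- z) = cabs2 z.
Proof. by case: z => a b; rewrite /cabs2 /= !sqrrN. Qed.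

Lemma cabs2Z (t : R) (z : R[i]) : cabs2 (t%:C * z) = t ^+ 2 * cabs2 z.
Proof. case: z => a b; rewrite /cabs2 /=; ring. Qed.

Lemma cabs20 : cabs2 (0 : R[i]) = 0.
Proof. by rewrite /cabs2 /= expr0n /= addr0. Qed.

Lemma cabs2_gt0 (z : R[i]) : z != 0 -> 0 < cabs2 z.
Proof.
case: z => a b nz; rewrite /cabs2 /=.
have : (a != 0) || (b != 0).
  rewrite -negb_and; apply/negP => /andP[/eqP a0 /eqP b0]; move: nz; rewrite a0 b0 eqxx //.
have ha := sqr_ge0 a; have hb := sqr_ge0 b.
case/orP => H.
  have h : 0 < a ^+ 2 by rewrite lt_def sqrf_eq0 H sqr_ge0.
  lra.
have h : 0 < b ^+ 2 by rewrite lt_def sqrf_eq0 H sqr_ge0.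
lra.
Qed.

Lemma conjZ (t : R) (z : R[i]) : Num.conj (t%:C * z) = t%:C * Num.conj z.
Proof. by case: z => a b; simpc. Qed.
Lemma hdotZ N' (t : R) (v q : 'I_N' -> R[i]) :
  hdot (fun i => t%:C * v i) q = t%:C * hdot v q.
Proof.
rewrite /hdot mulr_sumr; apply: eq_bigr => i _.
by rewrite conjZ mulrA.
Qed.

Lemma hdotN N' (v q : 'I_N' -> R[i]) : hdot (fun i => - v i) q = - hdot v q.
Proof.
rewrite /hdot -sumrN; apply: eq_bigr => i _.
by rewrite rmorphN mulNr.
Qed.

Lemma hdot0 N' (q : 'I_N' -> R[i]) : hdot (fun _ => 0) q = 0.
Proof. by rewrite /hdot big1 // => i _; rewrite rmorph0 mul0r. Qed.

Lemma wquadZ N' (t : R) (w v : 'I_N' -> R[i]) :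
  wquad w (fun i => t%:C * v i) = t ^+ 2 * wquad w v.
Proof.
rewrite /wquad mulr_sumr; apply: eq_bigr => i _.
by rewrite cabs2Z mulrCA.
Qed.

Lemma wquadN N' (w v : 'I_N' -> R[i]) : wquad w (fun i => - v i) = wquad w v.
Proof. by rewrite /wquad; apply: eq_bigr => i _; rewrite cabs2N. Qed.

Lemma wquad0 N' (w : 'I_N' -> R[i]) : wquad w (fun _ => 0) = 0.
Proof. by rewrite /wquad big1 // => i _; rewrite cabs20 mulr0. Qed.

Lemma wquad_ge0 N' (w v : 'I_N' -> R[i]) : 0 <= wquad w v.
Proof. by rewrite /wquad sumr_ge0 // => i _; rewrite mulr_ge0 // cabs2_ge0. Qed.

Lemma nrm2Z N' (t : R) (v : 'I_N' -> R[i]) :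
  nrm2 (fun i => t%:C * v i) = t ^+ 2 * nrm2 v.
Proof.
rewrite /nrm2 mulr_sumr; apply: eq_bigr => i _.
by rewrite cabs2Z.
Qed.

Lemma nrm2N N' (v : 'I_N' -> R[i]) : nrm2 (fun i => - v i) = nrm2 v.
Proof. by rewrite /nrm2; apply: eq_bigr => i _; rewrite cabs2N. Qed.

Lemma nrm20 N' : nrm2 (fun _ : 'I_N' => (0 : R[i])) = 0.
Proof. by rewrite /nrm2 big1 // => i _; rewrite cabs20. Qed.

Lemma nrm2_ge0 N' (v : 'I_N' -> R[i]) : 0 <= nrm2 v.
Proof. by rewrite /nrm2 sumr_ge0 // => i _; rewrite cabs2_ge0. Qed.

Lemma den_gt0 (w : 'I_N -> R[i]) : 0 < sigma2 + sigmar2 * wquad g w.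
Proof. by apply: ltr_pwDl => //; apply: mulr_ge0; [exact: ltW | exact: wquad_ge0]. Qed.

Lemma snr_ge0 p v k : 0 <= p k -> 0 <= snr p v k.
Proof.
move=> hp; rewrite /Defs.snr divr_ge0 ?mulr_ge0 ?cabs2_ge0 //.
exact: ltW (den_gt0 _).
Qed.

Lemma log2_lt (x y : R) : 0 < x -> x < y -> log2 x < log2 y.
Proof.
move=> hx hxy; rewrite /log2 ltr_pM2r; last by rewrite invr_gt0 ln_gt0 // ltr1n.
by rewrite ltr_ln // posrE // (lt_trans hx).
Qed.

Lemma log2_gt0 (x : R) : 1 < x -> 0 < log2 x.
Proof. by move=> hx; rewrite /log2 divr_gt0 // ln_gt0 // ltr1n. Qed.

Definition upd {A : Type} (f : 'I_K -> A) k x := fun i => if i == k then x else f i.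

Lemma improve_k tau p v k pk vk :
  feasible tau p v -> 0 < tau k -> tau k * pk <= E k -> 0 <= pk ->
  pk * wquad (hr k) vk + sigmar2 * nrm2 vk <= Pr ->
  snr p v k < pk * cabs2 (hd k + hdot vk (qvec g (hr k))) / (sigma2 + sigmar2 * wquad g vk) ->
  exists tau' p' v', feasible tau' p' v' /\ throughput tau p v < throughput tau' p' v'.
Proof.
move=> [F1 [F2 [F3 F4]]] ht hE hp hPr hsnr.
exists tau, (upd p k pk), (upd v k vk); split.
  split; [|split; [|split]] => // i; rewrite /upd; case: eqP => [->|_] //.
  by have [] := F3 k.
rewrite /Defs.throughput (sum_upd1 (fun i => tau i * log2 (1 + snr p v i))
   (fun i => tau i * log2 (1 + snr (upd p k pk) (upd v k vk) i)) k).
  rewrite ltrDl subr_gt0 ltr_pM2l // /Defs.snr /upd eqxx.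
  apply: log2_lt; last by rewrite ltrD2l.
  have [_ hp0] := F3 k.
  by rewrite ltr_pwDl // (snr_ge0 _ _ _ hp0).
by move=> i ni; rewrite /Defs.snr /upd (negbTE ni).
Qed.


Lemma cabs2_flip (z w : R[i]) : z != 0 ->
  cabs2 z + (complex.Re z * complex.Re w + complex.Im z * complex.Im w) <= 0 ->
  cabs2 (z + w) < cabs2 (z + - w).
Proof.
move=> nz; have := cabs2_gt0 _ nz; case: z nz => a b _; case: w => c d.
rewrite /cabs2 /= => h1 h2; nra.
Qed.

Lemma cabs2_shrink (z w : R[i]) (t : R) : z != 0 ->
  0 < cabs2 z + (complex.Re z * complex.Re w + complex.Im z * complex.Im w) ->
  0 < t -> t < 1 ->
  cabs2 (z + w) * t ^+ 2 < cabs2 (z + t%:C * w).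
Proof.
move=> nz; have := cabs2_gt0 _ nz; case: z nz => a b _; case: w => c d.
rewrite /cabs2 /= => h1 h2 t0 t1.
rewrite -subr_gt0.
have -> : (a + (t * c - 0 * d)) ^+ 2 + (b + (t * d + 0 * c)) ^+ 2 -
   ((a + c) ^+ 2 + (b + d) ^+ 2) * t ^+ 2 =
   (1 - t) * ((a ^+ 2 + b ^+ 2) * (1 - t) + 2 * t * (a ^+ 2 + b ^+ 2 + (a * c + b * d))).
  ring.
apply: mulr_gt0; first lra.
have h3 : 0 < (a ^+ 2 + b ^+ 2) * (1 - t) by apply: mulr_gt0 => //; lra.
have h4 : 0 < 2 * t * (a ^+ 2 + b ^+ 2 + (a * c + b * d)) by apply: mulr_gt0 => //; lra.
lra.
Qed.

Lemma case_pos tau p v k : feasible tau p v -> 0 < tau k -> tau k * p k < E k ->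
  exists tau' p' v', feasible tau' p' v' /\ throughput tau p v < throughput tau' p' v'.
Proof.
move=> hf ht hlt; have hf' := hf; move: hf' => [F1 [F2 [F3 F4]]].
have hEk := HE k.
have [_ hp0] := F3 k.
move: hp0; rewrite le_eqVlt => /orP [/eqP hp0 | hp].
  apply: (@improve_k _ _ _ k (E k / tau k) (fun _ => 0)) => //.
  - by rewrite mulrC divfK // gt_eqF.
  - by rewrite divr_ge0 // ltW.
  - by rewrite wquad0 nrm20 !mulr0 addr0 ltW.
  rewrite /Defs.snr -hp0 !mul0r hdot0 addr0 wquad0 mulr0 addr0.
  by rewrite divr_gt0 // mulr_gt0 ?divr_gt0 // cabs2_gt0.
set a := hdot (v k) (qvec g (hr k)).
have hden := den_gt0 (v k).
have [hD|hD] := lerP (cabs2 (hd k) + (complex.Re (hd k) * complex.Re a +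
                   complex.Im (hd k) * complex.Im a)) 0.
  apply: (@improve_k _ _ _ k (p k) (fun i => - v k i)) => //.
  - exact: ltW.
  - by rewrite wquadN nrm2N; apply: F4.
  rewrite /Defs.snr hdotN wquadN -/a.
  rewrite ltr_pM2r ?invr_gt0 // ltr_pM2l //.
  exact: cabs2_flip.
set r := tau k * p k / E k.
have r0 : 0 < r by rewrite divr_gt0 // mulr_gt0.
have r1 : r < 1 by rewrite /r ltr_pdivrMr // mul1r.
set t := (1 + r) / 2.
have t0 : 0 < t by rewrite /t; lra.
have t1 : t < 1 by rewrite /t; lra.
have t2 : 0 < t ^+ 2 by rewrite exprn_gt0.
have t21 : t ^+ 2 <= 1 by rewrite expr_le1 ?ltW.
have rt : r <= t ^+ 2.
  rewrite /t; have -> : ((1 + r) / 2) ^+ 2 = r + ((1 - r) / 2) ^+ 2 by field.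
  by rewrite lerDl sqr_ge0.
have hw := wquad_ge0 _ g (v k).
have hn := nrm2_ge0 _ (v k).
apply: (@improve_k _ _ _ k (p k / t ^+ 2) (fun i => t%:C * v k i)) => //.
- rewrite mulrA ler_pdivrMr //.
  have -> : tau k * p k = r * E k by rewrite /r divfK // gt_eqF.
  by rewrite mulrC ler_pM2l.
- by rewrite divr_ge0 // ltW.
- rewrite wquadZ nrm2Z mulrA divfK ?gt_eqF //.
  apply: le_trans (F4 k).
  rewrite lerD2l ler_pM2l //.
  by rewrite ler_piMl.
rewrite /Defs.snr hdotZ wquadZ -/a.
have hd1 : 0 < sigma2 + sigmar2 * (t ^+ 2 * wquad g (v k)).
  by apply: ltr_pwDl => //; apply: mulr_ge0; [exact: ltW | apply: mulr_ge0 => //; exact: ltW].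
have hdd : sigma2 + sigmar2 * (t ^+ 2 * wquad g (v k)) <= sigma2 + sigmar2 * wquad g (v k).
  by rewrite lerD2l ler_pM2l // ler_piMl.
apply: (@le_lt_trans _ _ (p k * cabs2 (hd k + a) / (sigma2 + sigmar2 * (t ^+ 2 * wquad g (v k))))).
  apply: ler_wpM2l; first by rewrite mulr_ge0 ?cabs2_ge0 // ltW.
  by rewrite lef_pV2 ?posrE.
rewrite ltr_pM2r ?invr_gt0 // mulrAC -mulrA ltr_pM2l // ltr_pdivlMr //.
exact: cabs2_shrink.
Qed.


Lemma case_zero tau p v k : feasible tau p v -> tau k = 0 ->
  exists tau' p' v', feasible tau' p' v' /\ throughput tau p v < throughput tau' p' v'.
Proof.
move=> hf htk; have hf' := hf; move: hf' => [F1 [F2 [F3 F4]]].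
have hEk := HE k.
have hc : 0 < cabs2 (hd k) by apply: cabs2_gt0.
set X := E k * cabs2 (hd k) / sigma2.
have hX : 0 < X by rewrite /X divr_gt0 // mulr_gt0.
have snrk : forall e, 0 < e ->
    snr (upd p k (E k / e)) (upd v k (fun _ => 0)) k = X / e.
  move=> e he; rewrite /Defs.snr /upd eqxx hdot0 addr0 wquad0 mulr0 addr0 /X.
  by field; apply/andP; split; rewrite gt_eqF.
move: F2; rewrite le_eqVlt => /orP [/eqP hsum | hsum].
  (* all time used: steal from some j *)
  have [j hj] : exists j, 0 < tau j.
    case: (boolP [exists j, 0 < tau j]) => [/existsP [j hj] | /existsPn hn].
      by exists j.
    have : \sum_i tau i = 0.
      apply: big1 => i _; have [hi _] := F3 i; apply/eqP; rewrite eq_le hi andbT.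
      by rewrite leNgt hn.
    by rewrite hsum => h; move: HT; rewrite h ltxx.
  have njk : j != k by apply/eqP => e; move: hj; rewrite e htk ltxx.
  set s := snr p v j.
  have hs0 : 0 <= s by apply: snr_ge0; have [] := F3 j.
  set e := Num.min (tau j) (X / (s + 1)).
  have he : 0 < e by rewrite lt_min hj divr_gt0 // ltr_pwDr.
  have hej : e <= tau j by rewrite ge_min lexx.
  have heX : e <= X / (s + 1) by rewrite ge_min lexx orbT.
  exists (upd (upd tau j (tau j - e)) k e), (upd p k (E k / e)), (upd v k (fun _ => 0)).
  split.
    split; [|split; [|split]].
    - move=> i; rewrite /upd; have [hik|ik] := eqVneq i k; first subst i.
        by rewrite ?eqxx mulrC divfK ?gt_eqF.
      rewrite ?(negbTE ik); have [hij|ij] := eqVneq i j; first subst i; last by rewrite ?(negbTE ij); exact: F1.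
      rewrite ?eqxx.
      have := F1 j; have [_ hpj] := F3 j.
      have : 0 <= e * p j by rewrite mulr_ge0 // ltW.
      move=> h1 h2; nra.
    - rewrite (sum_upd2 tau (upd (upd tau j (tau j - e)) k e) j k njk).
        rewrite /upd !eqxx (negbTE njk) htk -hsum; lra.
      by move=> i ij ik; rewrite /upd (negbTE ij) (negbTE ik).
    - move=> i; rewrite /upd; have [hik|ik] := eqVneq i k; first subst i.
        by rewrite ?eqxx; split; [exact: ltW | rewrite divr_ge0 // ltW].
      rewrite ?(negbTE ik); have [hij|ij] := eqVneq i j; first subst i; last by rewrite ?(negbTE ij); exact: F3.
      by rewrite ?eqxx; have [_ ?] := F3 j; rewrite subr_ge0 hej.
    - move=> i; rewrite /upd; have [hik|ik] := eqVneq i k; first subst i; last by rewrite ?(negbTE ik); exact: F4.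
      by rewrite ?eqxx wquad0 nrm20 !mulr0 addr0 ltW.
  rewrite /Defs.throughput.
  rewrite (sum_upd2 (fun i => tau i * log2 (1 + snr p v i))
     (fun i => upd (upd tau j (tau j - e)) k e i *
        log2 (1 + snr (upd p k (E k / e)) (upd v k (fun _ => 0)) i)) j k njk); last first.
    by move=> i ij ik; rewrite /Defs.snr /upd (negbTE ij) (negbTE ik).
  have -> : upd (upd tau j (tau j - e)) k e j = tau j - e by rewrite /upd (negbTE njk) eqxx.
  have -> : upd (upd tau j (tau j - e)) k e k = e by rewrite /upd eqxx.
  have -> : snr (upd p k (E k / e)) (upd v k (fun _ => 0)) j = s.
    by rewrite /Defs.snr /upd (negbTE njk).
  rewrite snrk // htk mul0r subr0 -/s.
  have hL : log2 (1 + s) < log2 (1 + X / e).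
    apply: log2_lt; first by rewrite ltr_pwDl.
    rewrite ltrD2l ltr_pdivlMr //.
    have : e * (s + 1) <= X by rewrite -ler_pdivlMr // ltr_pwDr.
    nra.
  nra.
set d := Tmax - \sum_i tau i.
have hd0 : 0 < d by rewrite /d subr_gt0.
exists (upd tau k d), (upd p k (E k / d)), (upd v k (fun _ => 0)).
split.
  split; [|split; [|split]].
  - move=> i; rewrite /upd; have [hik|ik] := eqVneq i k; first subst i; last by rewrite ?(negbTE ik); exact: F1.
    by rewrite ?eqxx mulrC divfK ?gt_eqF.
  - rewrite (sum_upd1 tau (upd tau k d) k).
      by rewrite /upd eqxx htk subr0 /d; lra.
    by move=> i ik; rewrite /upd (negbTE ik).
  - move=> i; rewrite /upd; have [hik|ik] := eqVneq i k; first subst i; last by rewrite ?(negbTE ik); exact: F3.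
    by rewrite ?eqxx; split; [exact: ltW | rewrite divr_ge0 // ltW].
  - move=> i; rewrite /upd; have [hik|ik] := eqVneq i k; first subst i; last by rewrite ?(negbTE ik); exact: F4.
    by rewrite ?eqxx wquad0 nrm20 !mulr0 addr0 ltW.
rewrite /Defs.throughput.
rewrite (sum_upd1 (fun i => tau i * log2 (1 + snr p v i))
   (fun i => upd tau k d i *
      log2 (1 + snr (upd p k (E k / d)) (upd v k (fun _ => 0)) i)) k); last first.
  by move=> i ik; rewrite /Defs.snr /upd (negbTE ik).
rewrite snrk // {1}/upd eqxx htk mul0r subr0 ltrDl.
apply: mulr_gt0 => //; apply: log2_gt0.
by rewrite ltrDl divr_gt0.
Qed.

Lemma main tau p v : optimal tau p v -> forall k, tau k * p k = E k.
Proof.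
move=> [hf hopt] k; have hf' := hf; move: hf' => [F1 [F2 [F3 F4]]].
apply/eqP; rewrite eq_le F1 /= leNgt; apply/negP => hlt.
have [tau' [p' [v' [hf2 hth]]]] : exists tau' p' v',
    feasible tau' p' v' /\ throughput tau p v < throughput tau' p' v'.
  have [ht0 _] := F3 k; move: ht0; rewrite le_eqVlt => /orP [/eqP h0 | hpos].
    exact: (case_zero _ _ _ _ hf (esym h0)).
  exact: (case_pos _ _ _ _ hf hpos hlt).
by have := hopt _ _ _ hf2; rewrite leNgt hth.
Qed.

End Pf.

Theorem lemma1 (R : realType) (N K : nat)
  (g : 'I_N -> R[i]) (hr : 'I_K -> 'I_N -> R[i]) (hd : 'I_K -> R[i])
  (sigma2 sigmar2 Pr Tmax : R) (E : 'I_K -> R) :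
  (0 < N)%N -> (0 < K)%N ->
  (forall n, g n != 0) ->
  (forall k n, hr k n != 0) ->
  (forall k, hd k != 0) ->
  0 < sigma2 -> 0 < sigmar2 -> 0 < Pr -> 0 < Tmax ->
  (forall k, 0 < E k) ->
  forall (tau p : 'I_K -> R) (v : 'I_K -> 'I_N -> R[i]),
    optimal g hr hd sigma2 sigmar2 Pr Tmax E tau p v ->
    forall k, tau k * p k = E k.
Proof.
move=> _ _ _ _ Hhd Hs Hsr HPr HT HE tau p v hopt k.
exact (@main R N K g hr hd sigma2 sigmar2 Pr Tmax E Hs Hsr HPr HT HE Hhd tau p v hopt k).
Qed.
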